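(* For every $n\ge 3$ the set $\Theta$ is non-empty; that is, flexible cross-polytopes of type $(n)$ (the simplest type) exist in the Lobachevsky space $\Lambda^n$.
   Context: Let $\Theta\subset\mathbb{R}^{n+\binom n2}$ be the set of pairs $(\boldsymbol{\lambda},G)$, where $\boldsymbol{\lambda}=(\lambda_1,\dots,\lambda_n)$ has nonzero real entries with $\lambda_p\ne\pm\lambda_q$ for $p\ne q$, and $G=(g_{pq})$ is a real symmetric $n\times n$ matrix with units on the diagonal, such that, with $H=(h_{pq})$ defined by $h_{pp}=1$ and $h_{pq}=\frac{2\lambda_p(\lambda_pg_{pq}-\lambda_q)}{\lambda_p^2-\lambda_q^2}$ for $p\ne q$, the following hold: (i) $G$ is non-degenerate indefinite with negative index of inertia $1$, and all principal minors of $G$ of sizes $2\times2,\dots,(n-1)\times(n-1)$ are strictly positive; (ii) $\sum_{q=1}^n\sum_{r=1}^n g^{qr}h_{pq}h_{pr}<0$ for $p=1,\dots,n$, where $(g^{qr})=G^{-1}$. These are exactly the pairs for which the flexible cross-polytope in $\Lambda^n$ with tangents of half dihedral angles at a fixed facet $t_p(x)=\lambda_p x$ is well defined (with vertices $\mathbf{a}_p=a_p\mathbf{c}_p$ and $\mathbf{b}_p(x)=b_p\big(\sum_q h_{pq}\mathbf{c}_q-\frac{2\lambda_p^2x^2}{\lambda_p^2x^2+1}\mathbf{n}_p+\frac{2\lambda_px}{\lambda_p^2x^2+1}\mathbf{m}\big)$, where $\mathbf{n}_p$ have Gram matrix $G$, $\mathbf{c}_p$ is the dual basis, $\mathbf{m}$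 is a unit vector orthogonal to all $\mathbf{n}_p$, and $a_p=\pm(-g^{pp})^{-1/2}$, $b_p=\pm(-\sum_{q,r}g^{qr}h_{pq}h_{pr})^{-1/2}$). *)

(* Defs.v *)
(* the real line is an arbitrary 'R : realType'
   (all realTypes are the real numbers up to isomorphism). *)
From HB Require Import structures.
From mathcomp Require Import all_boot all_order all_algebra.
From mathcomp Require Import reals.
Set Implicit Arguments. Unset Strict Implicit. Unset Printing Implicit Defensive.
Import Order.TTheory GRing.Theory Num.Theory.
Local Open Scope ring_scope.

Section Theta.
Variable R : realFieldType.
Variable n : nat.

Definition qform (G : 'M[R]_n) (x : 'rV[R]_n) : R := (x *m G *m x^T) 0 0.

Definition negdef_subspace k (G : 'M[R]_n) (U : 'M[R]_(k, n)) : Prop :=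
  row_free U /\ forall x : 'rV[R]_k, x != 0 -> qform G (x *m U) < 0.

Definition neg_inertia_index (G : 'M[R]_n) (k : nat) : Prop :=
  (exists U : 'M[R]_(k, n), negdef_subspace G U) /\
  (forall U : 'M[R]_(k.+1, n), ~ negdef_subspace G U).

Definition indefinite (G : 'M[R]_n) : Prop :=
  (exists x, qform G x < 0) /\ (exists x, 0 < qform G x).

Definition principal_minor (G : 'M[R]_n) (S : {set 'I_n}) : R :=
  \det (mxsub (fun i : 'I_#|S| => enum_val i) (fun i : 'I_#|S| => enum_val i) G).

Definition Hmx (lam : 'I_n -> R) (G : 'M[R]_n) : 'M[R]_n :=
  \matrix_(p, q)
    (if p == q then 1
     else 2 * lam p * (lam p * G p q - lam q) / (lam p ^+ 2 - lam q ^+ 2)).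

Definition inTheta (lam : 'I_n -> R) (G : 'M[R]_n) : Prop :=
  [/\ (forall p, lam p != 0),
      (forall p q, p != q -> lam p != lam q /\ lam p != - lam q),
      (G^T = G /\ forall p, G p p = 1),
      ([/\ \det G != 0, indefinite G, neg_inertia_index G 1 &
          (forall S : {set 'I_n}, (2 <= #|S| <= n.-1)%N -> 0 < principal_minor G S)])
    &
      (forall p, qform (invmx G) (row p (Hmx lam G)) < 0)].

End Theta.

(* Main.v *)
Require Import Defs.
From HB Require Import structures.
From mathcomp Require Import all_boot all_order all_algebra.
From mathcomp Require Import reals.
From mathcomp Require Import ring lra zify.
Set Implicit Arguments. Unset Strict Implicit. Unset Printing Implicit Defensive.
Import Order.TTheory GRing.Theory Num.Theory.
Local Open Scope ring_scope.

Section Aux.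
Variable R : realFieldType.

Definition J n : 'M[R]_n := const_mx 1.

Lemma mulJ m n (y : 'M[R]_(m,n)) i j : (y *m J n) i j = \sum_k y i k.
Proof. by rewrite mxE; apply: eq_bigr => k _; rewrite mxE mulr1. Qed.

Lemma qformE n (c d : R) (y : 'rV[R]_n) :
  qform (c%:M + d *: J n) y = c * \sum_i y 0 i ^+ 2 + d * (\sum_i y 0 i) ^+ 2.
Proof.
have E : forall j, (y *m (c%:M + d *: J n)) 0 j = c * y 0 j + d * \sum_i y 0 i.
  move=> j; rewrite mulmxDr mul_mx_scalar -scalemxAr.
  rewrite [in LHS]mxE [X in X + _]mxE [X in _ + X]mxE mulJ; ring.
rewrite /qform mxE.
under eq_bigr => j _ do rewrite E mxE mulrDl.
rewrite big_split /=; congr (_ + _).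
  by rewrite mulr_sumr; apply: eq_bigr => i _; rewrite expr2 mulrA.
by rewrite expr2 mulrA -mulr_sumr.
Qed.

Lemma Ment n (c d : R) i j : (c%:M + d *: J n) i j = c * (i == j)%:R + d.
Proof. by rewrite !mxE mulr1 mulr_natr. Qed.

Lemma JJ n : J n *m J n = n%:R *: J n.
Proof.
apply/matrixP => i j; rewrite mulJ !mxE mulr1.
under eq_bigr => k _ do rewrite mxE.
by rewrite sumr_const card_ord.
Qed.

Lemma mulM n (a g b e : R) :
  (a%:M + g *: J n) *m (b%:M + e *: J n) =
  (a * b)%:M + (a * e + g * b + n%:R * g * e) *: J n.
Proof.
rewrite mulmxDl !mulmxDr mul_scalar_mx mul_mx_scalar scale_scalar_mx.
rewrite mul_scalar_mx -scalemxAl -scalemxAr JJ !scalerA !scalerDl -!addrA.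
by rewrite (mulrC b g) (mulrC (g * e)) mulrA.
Qed.

Definition Em m : 'M[R]_m.+1 := \matrix_(i,j) ((i == ord0) && (j != ord0))%:R.

Lemma mulEr m (B : 'M[R]_m.+1) i j : (B *m Em m) i j = B i ord0 * (j != ord0)%:R.
Proof.
rewrite mxE big_ord_recl !mxE eqxx /= big1 ?addr0 // => l _.
by rewrite mxE eq_sym (negbTE (neq_lift _ _)) /= mulr0.
Qed.

Lemma mulEl m (B : 'M[R]_m.+1) i j :
  (Em m *m B) i j = (i == ord0)%:R * \sum_(l < m) B (lift ord0 l) j.
Proof.
rewrite mxE big_ord_recl !mxE eqxx andbF mul0r add0r mulr_sumr.
apply: eq_bigr => l _; rewrite mxE.
have -> : (lift ord0 l != ord0) = true by rewrite eq_sym neq_lift.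
by rewrite andbT.
Qed.


Lemma sumlift m (F : 'I_m.+1 -> R) :
  \sum_(l < m) F (lift ord0 l) = \sum_(l < m.+1) F l - F ord0.
Proof. by rewrite big_ord_recl addrAC subrr add0r. Qed.

Lemma sum_delta m (x : R) (j : 'I_m) : \sum_(l < m) x * (l == j)%:R = x.
Proof.
rewrite (bigD1 j) //= eqxx mulr1 big1 ?addr0 // => l /negbTE ->.
by rewrite mulr0.
Qed.

Lemma colsum m (a g : R) j :
  \sum_(l < m) (a%:M + g *: J m) l j = a + m%:R * g.
Proof.
under eq_bigr => l _ do rewrite Ment.
by rewrite big_split /= sum_delta sumr_const card_ord mulr_natl.
Qed.

Lemma ord_ne0 m (i j : 'I_m.+1) : (i < j)%N -> (j == ord0) = false.
Proof. by move=> lt; apply/negbTE/eqP => hj; rewrite hj in lt. Qed.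

Lemma ord_neqL k (i j : 'I_k) : (i < j)%N -> (j == i) = false.
Proof. by move=> lt; apply/negbTE/eqP => e; rewrite e ltnn in lt. Qed.
Lemma ord_neqR k (i j : 'I_k) : (i < j)%N -> (i == j) = false.
Proof. by move=> lt; apply/negbTE/eqP => e; rewrite e ltnn in lt. Qed.

Lemma lift0F k (i : 'I_k) : (lift ord0 i == ord0) = false.
Proof. by apply/negbTE; rewrite eq_sym neq_lift. Qed.

Lemma det_unitrig m (M : 'M[R]_m.+1) :
  (forall i j : 'I_m.+1, (i < j)%N -> M j i = 0) -> (forall i, M i i = 1) ->
  \det M = 1.
Proof.
move=> h1 h2; rewrite -det_tr det_trig.
  by rewrite big1 // => i _; rewrite mxE h2.
by apply/is_trig_mxP => i j lt; rewrite mxE h1.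
Qed.

Lemma detM m (a g : R) :
  \det (a%:M + g *: J m.+1) = a ^+ m * (a + m.+1%:R * g).
Proof.
set A := a%:M + g *: J m.+1.
set B := A *m (1%:M - Em m).
set L := (1%:M + Em m) *m B.
have dS : \det (1%:M + Em m : 'M[R]_m.+1) = 1.
  apply: det_unitrig => [i j lt|i]; rewrite !mxE.
    by rewrite (ord_ne0 lt) /= (ord_neqL lt) addr0.
  by rewrite eqxx andbN addr0.
have dT : \det (1%:M - Em m : 'M[R]_m.+1) = 1.
  apply: det_unitrig => [i j lt|i]; rewrite !mxE.
    by rewrite (ord_ne0 lt) /= (ord_neqL lt) subr0.
  by rewrite eqxx andbN subr0.
have dL : \det L = \det A by rewrite /L /B !det_mulmx dS dT mul1r mulr1.
have hB : forall i j, B i j = A i j - A i ord0 * (j != ord0)%:R.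
  by move=> i j; rewrite /B mulmxBr mulmx1 mxE [X in _ + X]mxE mulEr.
have hcol : forall j, \sum_(l < m.+1) B l j = (a + m.+1%:R * g) * (j == ord0)%:R.
  move=> j; under eq_bigr => l _ do rewrite hB.
  rewrite sumrB -mulr_suml !colsum; case: (j == ord0); rewrite /= ?mulr0 ?mulr1.
    by rewrite subr0.
  by rewrite subrr.
have hL : forall i j, L i j = if i == ord0 then \sum_(l < m.+1) B l j else B i j.
  move=> i j; rewrite /L mulmxDl mul1mx mxE mulEl (sumlift (fun l => B l j)).
  by case: eqP => [->|_]; rewrite ?mul1r ?mul0r ?addr0 // addrC subrK.
rewrite -/A -dL det_trig.
  rewrite big_ord_recl hL eqxx hcol eqxx mulr1 mulrC; congr (_ * _).
  rewrite -[in RHS](card_ord m) -prodr_const; apply: eq_bigr => i _.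
  by rewrite hL lift0F hB /A !Ment eqxx lift0F /=; ring.
apply/is_trig_mxP => i j lt; rewrite hL; case: eqP => [_|/eqP hi].
  by rewrite hcol (ord_ne0 lt) mulr0.
by rewrite hB /A !Ment (negbTE hi) (ord_ne0 lt) (ord_neqR lt) /=; ring.
Qed.


Lemma le_sum1 n (f : 'I_n -> R) i : (forall j, 0 <= f j) -> f i <= \sum_j f j.
Proof.
move=> h; rewrite (bigD1 i) //= lerDl; exact: sumr_ge0.
Qed.

Lemma sqsum_le n (f : 'I_n -> R) : (forall j, 0 <= f j) ->
  \sum_j f j ^+ 2 <= (\sum_j f j) ^+ 2.
Proof.
move=> h; rewrite [X in _ <= X]expr2 mulr_suml; apply: ler_sum => i _.
by rewrite expr2 ler_wpM2l // le_sum1.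
Qed.

Definition ppart (x : R) := if 0 <= x then x else 0.
Definition npart (x : R) := if x < 0 then - x else 0.

Lemma ppart_ge0 x : 0 <= ppart x.
Proof. by rewrite /ppart; case: ifP. Qed.
Lemma npart_ge0 x : 0 <= npart x.
Proof. by rewrite /npart; case: ifP => // /ltW; rewrite oppr_ge0. Qed.
Lemma ppnp x : x = ppart x - npart x.
Proof.
rewrite /ppart /npart; case: leP => h.
  by rewrite subr0.
by rewrite sub0r opprK.
Qed.
Lemma ppnp2 x : x ^+ 2 = ppart x ^+ 2 + npart x ^+ 2.
Proof.
rewrite /ppart /npart; case: leP => h.
  by rewrite expr0n addr0.
by rewrite expr0n add0r sqrrN.
Qed.

Lemma key_ineq n (h : 'I_n -> R) :
  let P := \sum_i ppart (h i) in
  let N := \sum_i npart (h i) in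
  (0 < P /\ 3 * N <= P) \/ (0 < N /\ 3 * P <= N) ->
  \sum_i h i ^+ 2 < 4 * (\sum_i h i) ^+ 2.
Proof.
move=> P N H.
have E1 : \sum_i h i = P - N.
  by rewrite /P /N -sumrB; apply: eq_bigr => i _; rewrite -ppnp.
have E2 : \sum_i h i ^+ 2 = \sum_i ppart (h i) ^+ 2 + \sum_i npart (h i) ^+ 2.
  by rewrite -big_split; apply: eq_bigr => i _; exact: ppnp2.
have s1 := sqsum_le (fun i => ppart_ge0 (h i)).
have s2 := sqsum_le (fun i => npart_ge0 (h i)).
have P0 : 0 <= P by apply: sumr_ge0 => i _; apply: ppart_ge0.
have N0 : 0 <= N by apply: sumr_ge0 => i _; apply: npart_ge0.
rewrite E1 E2; rewrite -/P -/N in s1 s2.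
case: H => [[h1 h2]|[h1 h2]]; nra.
Qed.


Ltac side := repeat (apply/andP; split); apply/eqP; nra.

Lemma hup (x y g : R) (x1 : 1 <= x) (x2 : x <= 2) (y1 : 1 <= y) (y2 : y <= 2) (g1 : -1 < g) (g0 : g < 0) : x < y -> 1 / (2 * (y - x)) <= 2 * x * (x * g - y) / (x ^+ 2 - y ^+ 2).
Proof.
move=> hlt.
have B0 : 0 < (y - x) * (y + x) by nra.
have e : 2 * x * (x * g - y) / (x ^+ 2 - y ^+ 2) = (2 * x * (y - x * g)) / ((y - x) * (y + x)).
  by field; repeat (apply/andP; split); apply/eqP; nra.
rewrite e ler_pdivlMr //.
have -> : 1 / (2 * (y - x)) * ((y - x) * (y + x)) = (y + x) / 2.
  by field; apply/eqP; lra.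
nra.
Qed.

Lemma hA (x y g : R) (x1 : 1 <= x) (x2 : x <= 2) (y1 : 1 <= y) (y2 : y <= 2) (g1 : -1 < g) (g0 : g < 0) : y < x -> 2 * x * (x * g - y) / (x ^+ 2 - y ^+ 2) =
   - ((2 * x * (y - x * g)) / ((x - y) * (x + y))).
Proof.
move=> hlt; by field; repeat (apply/andP; split); apply/eqP; nra.
Qed.

Lemma hlo1 (x y g : R) (x1 : 1 <= x) (x2 : x <= 2) (y1 : 1 <= y) (y2 : y <= 2) (g1 : -1 < g) (g0 : g < 0) : y < x -> 2 * x * (x * g - y) / (x ^+ 2 - y ^+ 2) <= - (1 / (2 * (x - y))).
Proof.
move=> hlt; rewrite hA // lerN2.
have B0 : 0 < (x - y) * (x + y) by nra.
rewrite ler_pdivlMr //.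
have -> : 1 / (2 * (x - y)) * ((x - y) * (x + y)) = (x + y) / 2.
  by field; apply/eqP; lra.
nra.
Qed.

Lemma hlo2 (x y g : R) (x1 : 1 <= x) (x2 : x <= 2) (y1 : 1 <= y) (y2 : y <= 2) (g1 : -1 < g) (g0 : g < 0) : y < x -> - (8 / (x - y)) <= 2 * x * (x * g - y) / (x ^+ 2 - y ^+ 2).
Proof.
move=> hlt; rewrite hA // lerN2.
have B0 : 0 < (x - y) * (x + y) by nra.
rewrite ler_pdivrMr //.
have -> : 8 / (x - y) * ((x - y) * (x + y)) = 8 * (x + y).
  by field; apply/eqP; lra.
nra.
Qed.



Lemma pow_le (e : R) q p : 0 <= e -> e <= 1 -> (q <= p)%N -> e ^+ p <= e ^+ q.
Proof.
move=> e0 e1 le; rewrite -(subnKC le) exprD ler_piMr ?exprn_ile1 //.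
exact: exprn_ge0.
Qed.

End Aux.

Section Params.
Variable R : realFieldType.
Variable n : nat.
Definition nR : R := n%:R.
Definition gg : R := - 4 / (4 * nR - 5).
Definition aa : R := 1 - gg.
Definition Gm : 'M[R]_n := aa%:M + gg *: J R n.
Definition Gi : 'M[R]_n := aa^-1%:M + (- 4 / aa) *: J R n.
Definition eps : R := (100 * nR)^-1.
Definition lamv (q : 'I_n) : R := 2 - eps ^+ q.
End Params.

Section Facts.
Variable R : realFieldType.

Lemma facts n : (3 <= n)%N ->
  [/\ 3 <= nR R n, gg R n * (4 * nR R n - 5) = -4, -1 < gg R n < 0,
      0 < aa R n & eps R n * (100 * nR R n) = 1].
Proof.
move=> hn.
have n3 : 3 <= nR R n by rewrite /nR (ler_nat R 3 n).
have D0 : 0 < 4 * nR R n - 5 by lra.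
have gD : gg R n * (4 * nR R n - 5) = -4 by rewrite /gg mulrAC -mulrA divff ?mulr1 //; lra.
have g0 : gg R n < 0 by nra.
have g1 : -1 < gg R n by nra.
split => //; first by apply/andP.
  by rewrite /aa; lra.
by rewrite /eps mulVf //; apply/eqP; lra.
Qed.
End Facts.


Section Main.
Variable R : realFieldType.

Lemma G_inv n : (3 <= n)%N -> Gm R n *m Gi R n = 1%:M.
Proof.
move=> hn; have [n3 gD /andP[g1 g0] a0 e1] := facts R hn.
rewrite /Gm /Gi mulM mulfV; last by rewrite gt_eqF.
have -> : aa R n * (-4 / aa R n) + gg R n * (aa R n)^-1 + nR R n * gg R n * (-4 / aa R n) = 0.
  have -> : aa R n * (-4 / aa R n) + gg R n * (aa R n)^-1 + nR R n * gg R n * (-4 / aa R n)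
     = (-4 * aa R n + gg R n - 4 * (nR R n * gg R n)) / aa R n.
    by field; rewrite gt_eqF.
  have -> : -4 * aa R n + gg R n - 4 * (nR R n * gg R n) = 0.
    rewrite /aa; nra.
  by rewrite mul0r.
by rewrite scale0r addr0.
Qed.

Lemma sqr_pos (c : R) : c != 0 -> 0 < c ^+ 2.
Proof. by move=> hc; rewrite lt0r sqrf_eq0 hc sqr_ge0. Qed.

Lemma negK n : (3 <= n)%N -> aa R n + gg R n * nR R n < 0.
Proof.
move=> hn; have [n3 gD /andP[g1 g0] a0 e1] := facts R hn.
have e : (aa R n + gg R n * nR R n) * (4 * nR R n - 5) =
   (4 * nR R n - 5) - gg R n * (4 * nR R n - 5) + nR R n * (gg R n * (4 * nR R n - 5)).
  by rewrite /aa; ring.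
rewrite gD in e.
have D0 : 0 < 4 * nR R n - 5 by lra.
have : (aa R n + gg R n * nR R n) * (4 * nR R n - 5) < 0 by rewrite e; lra.
by rewrite pmulr_llt0.
Qed.

Lemma posK n k : (3 <= n)%N -> (k <= n.-1)%N -> 0 < aa R n + gg R n * k%:R.
Proof.
move=> hn hk; have [n3 gD /andP[g1 g0] a0 e1] := facts R hn.
have kn : k%:R <= nR R n - 1.
  have -> : nR R n - 1 = (n.-1)%:R by rewrite /nR -(prednK (ltnW (ltnW hn))) -natr1 addrK.
  by rewrite ler_nat.
have e : (aa R n + gg R n * (nR R n - 1)) * (4 * nR R n - 5) =
   (4 * nR R n - 5) - gg R n * (4 * nR R n - 5) + (nR R n - 1) * (gg R n * (4 * nR R n - 5)).
  by rewrite /aa; ring.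
rewrite gD in e.
have D0 : 0 < 4 * nR R n - 5 by lra.
have : 0 < (aa R n + gg R n * (nR R n - 1)) * (4 * nR R n - 5) by rewrite e; lra.
rewrite pmulr_lgt0 // => h.
have : gg R n * (nR R n - 1) <= gg R n * k%:R by rewrite ler_wnM2l //; lra.
lra.
Qed.

Lemma qform_const n (c : R) : qform (Gm R n) (const_mx c) = c ^+ 2 * (nR R n * (aa R n + gg R n * nR R n)).
Proof.
rewrite /Gm qformE.
have -> : \sum_i (const_mx c : 'rV[R]_n) 0 i ^+ 2 = c ^+ 2 * nR R n.
  by under eq_bigr => i _ do rewrite mxE; rewrite sumr_const card_ord -mulr_natr.
have -> : \sum_i (const_mx c : 'rV[R]_n) 0 i = c * nR R n.
  by under eq_bigr => i _ do rewrite mxE; rewrite sumr_const card_ord -mulr_natr.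
by move: (aa R n) (gg R n) (nR R n) => A B N; ring.
Qed.

Lemma rowE1 n (x : 'rV[R]_1) : x *m (const_mx 1 : 'M_(1, n)) = const_mx (x 0 0).
Proof. by apply/matrixP => i j; rewrite mxE big_ord1 !mxE mulr1 (ord1 i). Qed.

Lemma neg1 n : (3 <= n)%N -> negdef_subspace (Gm R n) (const_mx 1 : 'M_(1, n)).
Proof.
move=> hn; have i0 : 'I_n by exists 0%N; rewrite (leq_trans _ hn).
split.
  rewrite /row_free rank_rV.
  have -> : (const_mx 1 : 'M[R]_(1, n)) != 0 = true.
    by apply/negP => /eqP/matrixP/(_ 0 i0); rewrite !mxE => /eqP; rewrite oner_eq0.
  by [].
move=> x hx; rewrite rowE1 qform_const.
have hx0 : x 0 0 != 0.
  apply: contra hx => /eqP h; apply/eqP/matrixP => i j; by rewrite !ord1 h mxE.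
rewrite pmulr_rlt0; last exact: sqr_pos.
have [n3 _ _ _ _] := facts R hn.
rewrite pmulr_rlt0; [exact: negK | rewrite /nR in n3 *; lra].
Qed.


Lemma sumsq_pos n (y : 'rV[R]_n) : y != 0 -> 0 < \sum_j y 0 j ^+ 2.
Proof.
move=> hy.
have [j hj] : exists j, y 0 j != 0.
  apply/existsP; apply: contraR hy => /existsPn h; apply/eqP/matrixP => i j.
  by rewrite (ord1 i) mxE; have := h j; rewrite negbK => /eqP.
apply: (lt_le_trans (sqr_pos hj)).
by apply: le_sum1 => k; apply: sqr_ge0.
Qed.

Lemma no2 n (U : 'M[R]_(2, n)) : (3 <= n)%N -> ~ negdef_subspace (Gm R n) U.
Proof.
move=> hn [rf hneg].
have [n3 gD /andP[g1 g0] a0 e1] := facts R hn.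
set s0 := \sum_j U ord0 j.
set s1 := \sum_j U (lift ord0 ord0) j.
pose x : 'rV[R]_2 := if (s0 == 0) && (s1 == 0) then \row_k ((k : nat) == 0%N)%:R
   else \row_k (if (k : nat) == 0%N then s1 else - s0).
have xE : forall j, (x *m U) 0 j = x 0 ord0 * U ord0 j + x 0 (lift ord0 ord0) * U (lift ord0 ord0) j.
  by move=> j; rewrite mxE !big_ord_recl big_ord0 addr0.
have xn0 : x != 0.
  rewrite /x; case: ifP => [_|/negbT].
    by apply/negP => /eqP/matrixP/(_ 0 ord0); rewrite !mxE /= => /eqP; rewrite oner_eq0.
  rewrite negb_and => hs; apply/negP => /eqP/matrixP hm.
  have := hm 0 ord0; have := hm 0 (lift ord0 ord0); rewrite !mxE /= => /eqP h1 /eqP h0.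
  by rewrite oppr_eq0 in h1; move: hs; rewrite h1 h0.
have sum0 : \sum_j (x *m U) 0 j = 0.
  under eq_bigr => j _ do rewrite xE.
  rewrite big_split /= -!mulr_sumr -/s0 -/s1 /x.
  case: ifP => [/andP[/eqP -> /eqP ->]|_]; rewrite !mxE /=.
    by rewrite !mulr0 addr0.
  by rewrite mulNr mulrC addrN.
have y0 : x *m U != 0 by rewrite mulmx_free_eq0.
have := hneg _ xn0; rewrite /Gm qformE sum0 expr0n /= mulr0 addr0.
have := sumsq_pos y0; nra.
Qed.


Lemma minor_pos n (S : {set 'I_n}) : (3 <= n)%N -> (2 <= #|S| <= n.-1)%N ->
  0 < principal_minor (Gm R n) S.
Proof.
move=> hn /andP[k2 kn]; rewrite /principal_minor.
have [n3 gD /andP[g1 g0] a0 e1] := facts R hn.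
have -> : mxsub (fun i : 'I_#|S| => enum_val i) (fun i => enum_val i) (Gm R n)
    = (aa R n)%:M + gg R n *: J R #|S|.
  by apply/matrixP => i j; rewrite mxE /Gm !Ment (inj_eq enum_val_inj).
have := posK hn kn; move: k2 kn; case: #|S| => [//|m] _ _ hp.
rewrite detM; apply: mulr_gt0; first exact: exprn_gt0.
by rewrite mulrC.
Qed.

Lemma delta_sums n (i0 : 'I_n) :
  \sum_j (delta_mx 0 i0 : 'rV[R]_n) 0 j ^+ 2 = 1 /\ \sum_j (delta_mx 0 i0 : 'rV[R]_n) 0 j = 1.
Proof.
split; rewrite (bigD1 i0) //= big1 ?addr0 ?mxE ?eqxx ?expr1n // => j /negbTE hj;
  by rewrite mxE hj ?expr0n.
Qed.


Lemma efacts n : (3 <= n)%N -> 0 < eps R n /\ 300 * eps R n <= 1.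
Proof.
move=> hn; have [n3 _ _ _ e1] := facts R hn.
have e0 : 0 < eps R n by rewrite /eps invr_gt0; lra.
by split => //; nra.
Qed.

Lemma lam_bounds n (q : 'I_n) : (3 <= n)%N -> 1 <= lamv R q <= 2.
Proof.
move=> hn; have [e0 e3] := efacts hn.
have h1 : eps R n ^+ q <= 1 by apply: exprn_ile1; lra.
have h0 : 0 < eps R n ^+ q by apply: exprn_gt0.
by rewrite /lamv; apply/andP; split; lra.
Qed.

Lemma epow_lt n (q p : nat) : (3 <= n)%N -> (q < p)%N -> eps R n ^+ p <= eps R n * eps R n ^+ q.
Proof.
move=> hn hqp; have [e0 e3] := efacts hn.
rewrite -exprS; apply: pow_le => //; lra.
Qed.

Lemma lam_lt n (q p : 'I_n) : (3 <= n)%N -> (q < p)%N -> lamv R q < lamv R p.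
Proof.
move=> hn hqp; have [e0 e3] := efacts hn.
have := epow_lt hn hqp; have : 0 < eps R n ^+ q by apply: exprn_gt0.
rewrite /lamv; nra.
Qed.

Lemma Hent n (p q : 'I_n) : p != q ->
  Hmx (@lamv R n) (Gm R n) p q =
  2 * lamv R p * (lamv R p * gg R n - lamv R q) / (lamv R p ^+ 2 - lamv R q ^+ 2).
Proof. by move=> hpq; rewrite mxE (negbTE hpq) /Gm Ment (negbTE hpq) mulr0 add0r. Qed.

Lemma inv_le (d E : R) : 0 < d -> d <= E -> 1 / (2 * E) <= 1 / (2 * d).
Proof.
move=> d0 dE; rewrite !div1r lef_pV2 ?posrE; lra.
Qed.


Lemma npart_le (x B : R) : 0 <= B -> - B <= x -> npart x <= B.
Proof. by move=> B0 hx; rewrite /npart; case: ifP => _; lra. Qed.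

Lemma npart0 (x : R) : 0 <= x -> npart x = 0.
Proof. by move=> hx; rewrite /npart ltNge hx. Qed.

Lemma ppart0 (x : R) : x < 0 -> ppart x = 0.
Proof. by move=> hx; rewrite /ppart leNgt hx. Qed.

Lemma natB (p n : nat) : (p < n)%N -> (n <= p.+1)%N -> (3 <= n)%N ->
  [/\ (2 <= p)%N, (p.-1 < n)%N, (p.-1 < p)%N, (1 <= p.-1)%N & p.-1 != p].
Proof. move=> *; split; lia. Qed.

Lemma natQ (q p n : nat) : (q < n)%N -> (n <= p.+1)%N -> q != p -> (q < p)%N.
Proof. move=> *; lia. Qed.

Lemma rowcond n (p : 'I_n) : (3 <= n)%N ->
  qform (invmx (Gm R n)) (row p (Hmx (@lamv R n) (Gm R n))) < 0.
Proof.
move=> hn.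
have [n3 gD /andP[g1 g0] a0 e1] := facts R hn.
have [e0 e3] := efacts hn.
have GG := G_inv hn.
have uG := (mulmx1_unit GG).1.
have -> : invmx (Gm R n) = Gi R n by rewrite -[Gi R n](mulKmx uG) GG mulmx1.
pose h : 'I_n -> R := fun q => Hmx (@lamv R n) (Gm R n) p q.
have hE : forall q, (row p (Hmx (@lamv R n) (Gm R n))) 0 q = h q by move=> q; rewrite mxE.
rewrite /Gi qformE.
under eq_bigr => q _ do rewrite hE.
under [X in _ + _ * X ^+ 2]eq_bigr => q _ do rewrite hE.
suff key : \sum_q h q ^+ 2 < 4 * (\sum_q h q) ^+ 2.
  have -> : (aa R n)^-1 * \sum_q h q ^+ 2 + -4 / aa R n * (\sum_q h q) ^+ 2
     = (\sum_q h q ^+ 2 - 4 * (\sum_q h q) ^+ 2) / aa R n.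
    by move: (\sum_q h q ^+ 2) (\sum_q h q) => A B; field; rewrite gt_eqF.
  by rewrite ltr_pdivrMr // mul0r; lra.
apply: key_ineq.
have hp1 : h p = 1 by rewrite /h mxE eqxx.
have lb := fun q => lam_bounds q hn.
have Ep : forall k, 0 < (eps R n) ^+ k by move=> k; apply: exprn_gt0.
case: (ltnP p.+1 n) => hpn.
- left; pose p1 : 'I_n := Ordinal hpn.
  have hpp1 : p != p1.
    by apply/eqP => /(congr1 val) /= /eqP; rewrite eqn_leq ltnn andbF.
  have lamlt : lamv R p < lamv R p1 by apply: lam_lt.
  have [x1 x2] := andP (lb p); have [y1 y2] := andP (lb p1).
  have hup1 := hup x1 x2 y1 y2 g1 g0 lamlt.
  rewrite -(Hent hpp1) in hup1.
  have dd : lamv R p1 - lamv R p = (eps R n) ^+ p - (eps R n) ^+ p.+1 by rewrite /lamv /=; ring.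
  have hB : 1 / (2 * (eps R n) ^+ p) <= h p1.
    apply: le_trans hup1; apply: inv_le; first lra.
    by rewrite dd; have := Ep p.+1; lra.
  have P1 : h p1 <= \sum_q ppart (h q).
    apply: le_trans (@le_sum1 R n (fun q => ppart (h q)) p1 (fun q => ppart_ge0 (h q))).
    by rewrite /ppart; case: ifP => // /negbT; rewrite -ltNge => /ltW.
  have bnd : forall q, npart (h q) <= 16 * (eps R n) / (eps R n) ^+ p.
    move=> q; case: (ltnP q p) => hq.
    + have hpq : p != q by apply/eqP => e; rewrite e ltnn in hq.
      have lamqp : lamv R q < lamv R p by apply: lam_lt.
      have [z1 z2] := andP (lb q).
      have hl := hlo2 x1 x2 z1 z2 g1 g0 lamqp.
      rewrite -(Hent hpq) in hl.
      apply: (le_trans (npart_le _ hl)); first by rewrite divr_ge0 //; lra.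
      have dq : lamv R p - lamv R q = (eps R n) ^+ q - (eps R n) ^+ p by rewrite /lamv; ring.
      have ep := epow_lt hn hq; 
      have Eq := Ep q; have Epp := Ep p.
      rewrite dq ler_pdivrMr; last lra.
      rewrite mulrAC ler_pdivlMr //.
      have hh : 0 <= (1 - 2 * (eps R n)) * (eps R n) ^+ p.
        have : 0 <= 1 - 2 * (eps R n) by lra.
        by move=> h2; apply: mulr_ge0 => //; apply: ltW.
      nra.
    + have hge : 0 <= h q.
        case: (eqVneq q p) => [->|hqp]; first by rewrite hp1.
        have hpq : p != q by rewrite eq_sym.
        have hlt : (p < q)%N by rewrite ltn_neqAle hq andbT; apply: contra hqp => /eqP e; apply/eqP/val_inj.
        have lamqp : lamv R p < lamv R q by apply: lam_lt.
        have [z1 z2] := andP (lb q).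
        have hl := hup x1 x2 z1 z2 g1 g0 lamqp.
        rewrite -(Hent hpq) in hl; apply: le_trans hl.
        by rewrite divr_ge0 //; lra.
      by rewrite npart0 // divr_ge0 //; [lra | apply: ltW].
  have Nb : \sum_q npart (h q) <= nR R n * (16 * (eps R n) / (eps R n) ^+ p).
    apply: le_trans; first by apply: ler_sum => q _; exact: bnd.
    by rewrite sumr_const card_ord [X in _ <= X]mulrC /nR mulr_natr.
  have eN : (eps R n) * nR R n = 1 / 100 by lra.
  have Epp := Ep p.
  have F : 3 * (nR R n * (16 * (eps R n) / (eps R n) ^+ p)) <= 1 / (2 * (eps R n) ^+ p).
    have -> : 3 * (nR R n * (16 * (eps R n) / (eps R n) ^+ p)) = 48 * ((eps R n) * nR R n) / (eps R n) ^+ p.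
      by field; rewrite gt_eqF.
    rewrite eN.
    have -> : 1 / (2 * eps R n ^+ p) = (1 / 2) / eps R n ^+ p by field; rewrite gt_eqF.
    rewrite ler_pM2r ?invr_gt0 //; lra.
  split; first by apply: lt_le_trans P1; apply: lt_le_trans hB; rewrite div1r invr_gt0; lra.
  by apply: le_trans (le_trans hB P1); apply: le_trans F; lra.
- right.
  have [p2 hpm pp1 p11 ppn] := natB (ltn_ord p) hpn hn.
  pose pm : 'I_n := Ordinal hpm.
  have [x1 x2] := andP (lb p).
  have qlt : forall q : 'I_n, q != p -> (q < p)%N.
    move=> q hq; have : (q : nat) != p by apply: contra hq => /eqP e; apply/eqP/val_inj.
    by move=> hh; exact: natQ (ltn_ord q) hpn hh.
  have hneg : forall q : 'I_n, q != p -> h q <= - (1 / (2 * (lamv R p - lamv R q))).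
    move=> q hq; have hq' := qlt q hq.
    have lamqp : lamv R q < lamv R p by apply: lam_lt.
    have [z1 z2] := andP (lb q).
    have hl := hlo1 x1 x2 z1 z2 g1 g0 lamqp.
    by rewrite -(Hent (_ : p != q)) ?(eq_sym p) // in hl.
  have P1 : \sum_q ppart (h q) = 1.
    rewrite (bigD1 p) //= hp1 big1 ?addr0.
      by rewrite /ppart ler01.
    move=> q hq; apply: ppart0; apply: (le_lt_trans (hneg q hq)).
    rewrite oppr_lt0 div1r invr_gt0 pmulr_rgt0 // subr_gt0; apply: lam_lt => //.
    exact: qlt.
  have pmp : pm != p by apply/eqP => /(congr1 val) /= /eqP; apply/negP.
  have dd : lamv R p - lamv R pm = eps R n ^+ p.-1 - eps R n ^+ p by rewrite /lamv /=; ring.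
  have Ee : eps R n ^+ p.-1 <= eps R n.
    rewrite -[X in _ <= X]expr1; apply: pow_le; [exact: ltW | lra | exact: p11].
  have Ep0 := Ep p.
  have N1 : 3 <= npart (h pm).
    have hl := hneg pm pmp.
    have : 3 <= 1 / (2 * (lamv R p - lamv R pm)).
      have dpos : 0 < lamv R p - lamv R pm.
        by rewrite subr_gt0; apply: (lam_lt hn); exact: pp1.
      rewrite ler_pdivlMr; last by lra.
      rewrite dd in dpos *; lra.
    by rewrite /npart; case: ifP => [_|/negbT]; rewrite -?leNgt; lra.
  have N2 : npart (h pm) <= \sum_q npart (h q).
    exact: (@le_sum1 R n (fun q => npart (h q)) pm (fun q => npart_ge0 (h q))).
  rewrite P1; split; lra.
Qed.

End Main.

Unset Implicit Arguments.
Set Strict Implicit.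

Theorem mainTheorem16 (R : realType) (n : nat) (hn : (3 <= n)%N) :
  exists (lam : 'I_n -> R) (G : 'M[R]_n), inTheta lam G.
Proof.
exists (@lamv R n), (Gm R n).
have [n3 gD /andP[g1 g0] a0 e1] := facts R hn.
have i0 : 'I_n by exists 0%N; exact: leq_trans hn.
split.
- move=> p; have /andP[l1 _] := lam_bounds R p hn.
  by rewrite gt_eqF //; apply: lt_le_trans l1; apply: ltr01.
- move=> p q hpq; have /andP[l1 _] := lam_bounds R p hn; have /andP[l2 _] := lam_bounds R q hn.
  split; last by apply/eqP => e; lra.
  case: (ltngtP p q) => h.
  + by rewrite lt_eqF //; apply: lam_lt.
  + by rewrite gt_eqF //; apply: lam_lt.
  + by move: hpq; rewrite (val_inj h) eqxx.
- split.
    by apply/matrixP => i j; rewrite mxE /Gm !Ment eq_sym.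
  by move=> p; rewrite /Gm Ment eqxx mulr1 /aa subrK.
- split.
  + by have [uG _] := mulmx1_unit (G_inv R hn); rewrite unitmxE unitfE in uG.
  + split.
      exists (const_mx 1); rewrite qform_const expr1n mul1r pmulr_rlt0; first exact: negK.
      by rewrite /nR in n3 *; lra.
    exists (delta_mx 0 i0); rewrite /Gm qformE; have [d1 d2] := delta_sums R i0.
    by rewrite d1 d2 expr1n !mulr1 /aa subrK; apply: ltr01.
  + split; first by eexists; exact: (neg1 R hn).
    by move=> U; exact: no2 hn.
  + move=> S hS. have := @minor_pos R n S hn hS. exact.
- move=> p; have := @rowcond R n p hn; exact.
Qed.
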